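(* Let $u,v\in S_n$. Then $C(v)\subseteq C(u)$ (i.e. $u\le v$ in the shard intersection order) if and only if both of the following hold: (Refinement) the set partition of $\{1,\dots,n\}$ into blocks of $u$ refines the set partition into blocks of $v$; (Consistency) whenever $i<k<j$, $i$ and $j$ lie in the same block of $u$, and $k$ does not lie in that block of $u$, then either $k$ lies in the same block of $v$ as $i$ and $j$, or $k$ lies on the same side (left or right) of $i$ in $v$ as it does in $u$.
   Context: For $w=w(1)\cdots w(n)\in S_n$ (one-line notation), the blocks of $w$ are the sets of letters of its maximal decreasing runs (maximal consecutive factors $w(a)>w(a+1)>\cdots>w(b)$). Let $V=\{x\in\mathbb R^n:\sum_i x_i=0\}$. The cone $C(w)\subseteq V$ is the set of $x\in V$ such that: (i) $x_i=x_j$ whenever $i,j$ lie in the same block of $w$; (ii) whenever $i<k<j$ with $i,j$ in the same block and $k$ not in that block, $x_k\le x_i$ if $k$ appears to the left of $i$ in $w$, and $x_i\le x_k$ if $k$ appears to the right of $i$ in $w$. The shard intersection order on $S_n$: $u\le v$ iff $C(v)\subseteq C(u)$. *)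

(* Defs.v *)
From HB Require Import structures.
From mathcomp Require Import all_boot all_order all_algebra all_fingroup.
Set Implicit Arguments. Unset Strict Implicit. Unset Printing Implicit Defensive.
Import Order.TTheory GRing.Theory Num.Theory.

(* Conventions: a permutation w : 'S_n is read in one-line notation
   w(0) w(1) ... w(n-1); positions and letters are both in 'I_n
   (i.e. {0,...,n-1} instead of {1,...,n}). *)

Definition pos n (w : 'S_n) (a : 'I_n) : 'I_n := (w^-1)%g a.

(* letters a and b lie in the same block (maximal decreasing run) of w:
   every adjacent pair of positions between them is a descent. *)
Definition same_block n (w : 'S_n) (a b : 'I_n) : bool :=
  [forall t : 'I_n, forall t' : 'I_n,
     ((minn (pos w a) (pos w b) <= t)%N && (t' == t.+1 :> nat)
        && (t' <= maxn (pos w a) (pos w b))%N)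
     ==> (w t' < w t)%N].

(* the cone C(w) in V = { x in R^n | sum x = 0 }, coordinates indexed by letters *)
Definition in_cone (R : realFieldType) n (w : 'S_n) (x : 'I_n -> R) : Prop :=
  (\sum_(i < n) x i = 0)%R /\
  (forall i j : 'I_n, same_block w i j -> x i = x j) /\
  (forall i k j : 'I_n, (i < k)%N -> (k < j)%N -> same_block w i j ->
      ~~ same_block w k i ->
      ((pos w k < pos w i)%N -> (x k <= x i)%R) /\
      ((pos w i < pos w k)%N -> (x i <= x k)%R)).

Definition shard_le (R : realFieldType) n (u v : 'S_n) : Prop :=
  forall x : 'I_n -> R, in_cone v x -> in_cone u x.

Definition refines n (u v : 'S_n) : Prop :=
  forall a b : 'I_n, same_block u a b -> same_block v a b.

Definition consistent n (u v : 'S_n) : Prop :=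
  forall i k j : 'I_n, (i < k)%N -> (k < j)%N -> same_block u i j ->
    ~~ same_block u k i ->
    same_block v k i \/ ((pos u k < pos u i)%N <-> (pos v k < pos v i)%N).

(* Main.v *)
Require Import Defs.
From mathcomp Require Import all_boot all_order all_algebra all_fingroup.
From mathcomp Require Import zify.
Set Implicit Arguments. Unset Strict Implicit. Unset Printing Implicit Defensive.
Import Order.TTheory GRing.Theory Num.Theory.

Section Aux.
Variable n : nat.
Implicit Types (w : 'S_n) (a b : 'I_n).

Definition D w (p q : nat) : nat :=
  \sum_(t < n) \sum_(t' < n) [&& t' == t.+1 :> nat, (p <= t)%N, (t' <= q)%N & (w t < w t')%N].

Lemma Dsplit w p q : (p <= q)%N -> D w 0 q = D w 0 p + D w p q.
Proof.
move=> hpq; rewrite /D -big_split; apply eq_bigr => t _; rewrite -big_split.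
apply eq_bigr => t' _ /=.
case: eqP => [->|] //=; case: (w t < w t')%N; rewrite ?andbF ?andbT //=.
case H1: (t.+1 <= p)%N; case H2: (p <= t)%N; case H3 : (t.+1 <= q)%N => //=; lia.
Qed.

Lemma sb_sym w a b : same_block w a b = same_block w b a.
Proof. by rewrite /same_block minnC maxnC. Qed.

Lemma sbD w a b : same_block w a b =
  (D w (minn (pos w a) (pos w b)) (maxn (pos w a) (pos w b)) == 0%N).
Proof.
apply/idP/idP.
- move=> H; apply/eqP; apply big1 => t _; apply big1 => t' _.
  move/forallP: H => /(_ t) /forallP /(_ t') /implyP H.
  case E: [&& _, _, _ & _] => //.
  move/and4P: E => [/eqP h1 h2 h3 h4].
  have := H; rewrite h2 h3 /= h1 eqxx /= => /(_ isT) h5.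
  lia.
- move/eqP=> HD; apply/forallP => t; apply/forallP => t'.
  apply/implyP => /andP [/andP [h1 /eqP h2] h3].
  have : (nat_of_bool [&& t' == t.+1 :> nat, (minn (pos w a) (pos w b) <= t)%N,
     (t' <= maxn (pos w a) (pos w b))%N & (w t < w t')%N] <= 0)%N.
    rewrite -HD /D (bigD1 t) //= (bigD1 t') //= -addnA; exact: leq_addr.
  rewrite leqn0 h1 h3 h2 eqxx /=.
  case: (ltngtP (w t') (w t)) => //=.
  move=> E; have /perm_inj E' : w t' = w t by apply: val_inj.
  by move: h2; rewrite E'; lia.
Qed.

Definition g w a := D w 0 (pos w a).

Lemma g_split w a b : (pos w a <= pos w b)%N ->
  g w b = g w a + D w (minn (pos w a) (pos w b)) (maxn (pos w a) (pos w b)).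
Proof.
move=> h; rewrite /g (minn_idPl h) (maxn_idPr h); exact: Dsplit.
Qed.

Variable R : realFieldType.

Definition xw w a : R := ((g w a * n)%:R - (\sum_(b < n) g w b)%:R)%R.

Lemma n_pos a : (0 < n)%N.
Proof. by apply: leq_ltn_trans (ltn_ord a). Qed.

Lemma x_lt w a b : (pos w a <= pos w b)%N -> ~~ same_block w a b -> (xw w a < xw w b)%R.
Proof.
move=> h; rewrite sbD -lt0n => hD.
rewrite /xw ltrD2r ltr_nat ltn_pmul2r ?(n_pos a) // (g_split h).
by rewrite -[X in (X < _)%N]addn0 ltn_add2l.
Qed.

Lemma x_le w a b : (pos w a <= pos w b)%N -> (xw w a <= xw w b)%R.
Proof.
move=> h; rewrite /xw lerD2r ler_nat leq_mul2r (g_split h) leq_addr orbT //.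
Qed.

Lemma x_eq w a b : same_block w a b -> xw w a = xw w b.
Proof.
have key : forall a b, (pos w a <= pos w b)%N -> same_block w a b -> xw w a = xw w b.
  move=> a' b' h; rewrite sbD => /eqP hD.
  by rewrite /xw (g_split h) hD addn0.
case: (leqP (pos w a) (pos w b)) => h; first exact: key.
rewrite sb_sym => /(key _ _ (ltnW h)) ->; done.
Qed.

Lemma x_in_cone w : in_cone w (xw w).
Proof.
split; last split.
- rewrite /xw sumrB sumr_const card_ord -mulr_natr.
  under eq_bigr do rewrite natrM.
  by rewrite -mulr_suml natr_sum mul1r mulr_natr subrr.
- move=> i j; exact: x_eq.
- move=> i k j _ _ _ _; split=> h; apply: x_le; exact: ltnW.
Qed.

Lemma pos_lt w i k : i != k -> ~~ (pos w k < pos w i)%N -> (pos w i < pos w k)%N.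
Proof.
move=> ik; rewrite -leqNgt => h; rewrite ltn_neqAle h andbT.
apply/eqP => /val_inj/perm_inj E; by rewrite E eqxx in ik.
Qed.

End Aux.

Theorem mainTheorem6 (R : realFieldType) (n : nat) (u v : 'S_n) :
  shard_le R u v <-> refines u v /\ consistent u v.
Proof.
split.
- move=> H; have [_ [Heq Hineq]] := H _ (x_in_cone R v).
  have Hr : refines u v.
    move=> a b sbu; apply/negPn/negP => nsb.
    have := Heq a b sbu.
    case: (leqP (pos v a) (pos v b)) => h.
    + move: (x_lt R h nsb) => hl E; by rewrite E ltxx in hl.
    + rewrite sb_sym in nsb.
      move: (x_lt R (ltnW h) nsb) => hl E; by rewrite E ltxx in hl.
  split=> // i k j hik hkj sbu nsbu.
  case: (boolP (same_block v k i)) => [?|nsbv]; first by left.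
  right; have [h1 h2] := Hineq i k j hik hkj sbu nsbu.
  case E1: (pos u k < pos u i)%N; case E2: (pos v k < pos v i)%N; try by split.
  + have hle := h1 E1.
    have hv : (pos v i <= pos v k)%N by rewrite leqNgt E2.
    rewrite sb_sym in nsbv.
    have := x_lt R hv nsbv; by rewrite ltNge hle.
  + have ik : i != k by rewrite neq_ltn hik.
    have hle := h2 (@pos_lt _ u _ _ ik (negbT E1)).
    have := x_lt R (ltnW E2) nsbv; by rewrite ltNge hle.
- move=> [Hr Hc] x [Hs [He Hi]]; split; first done; split.
  + move=> a b /Hr; apply He.
  + move=> i k j hik hkj sbu nsbu.
    have sbv := Hr _ _ sbu.
    have sameb : same_block v k i -> ((pos u k < pos u i)%N -> (x k <= x i)%R) /\
      ((pos u i < pos u k)%N -> (x i <= x k)%R).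
      by move=> s; rewrite (He k i s); split=> _; exact: lexx.
    case: (boolP (same_block v k i)) => [s|nsbv]; first exact: sameb.
    case: (Hc i k j hik hkj sbu nsbu) => [s|Hiff]; first exact: sameb.
    have [h1 h2] := Hi i k j hik hkj sbv nsbv.
    have ik : i != k by rewrite neq_ltn hik.
    split; first by move=> /Hiff; exact: h1.
    move=> hlt; apply: h2; apply: (@pos_lt _ v _ _ ik); apply/negP => /Hiff h.
    lia.
Qed.
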